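(* Let $\mu^\ast$ be an upper quasi-density on $\mathbb{H}$, and let $X\subseteq Y\subseteq\mathbb{H}$, where $Y$ has finite symmetric difference with a finite union of sets of the form $q\cdot\mathbb{H}+r$ ($q\in\mathbb{N}^+$, $r\in\mathbb{N}$) (equivalently: there are $k\in\mathbb{N}^+$ and $\mathcal{H}\subseteq\{0,1,\dots,k-1\}$ such that $Y\,\triangle\,\bigcup_{h\in\mathcal{H}}(k\cdot\mathbb{H}+h)$ is finite; this includes the case where $Y$ itself is such a finite union). Then $\mu^\ast(X)\le\mu^\ast(Y)$.
   Context: $\mathbb{N}=\{0,1,2,\dots\}$, $\mathbb{N}^+=\{1,2,\dots\}$; $\mathbb{H}$ is one of $\mathbb{Z},\mathbb{N},\mathbb{N}^+$. For $X\subseteq\mathbb{H}$, $k\in\mathbb{N}^+$, $h\in\mathbb{N}$, $k\cdot X+h:=\{kx+h:x\in X\}$. An upper quasi-density on $\mathbb{H}$ is a function $\mu^\ast:\mathcal{P}(\mathbb{H})\to\mathbb{R}$ with $\mu^\ast(\mathbb{H})=1$, $\mu^\ast(X)\le1$ for all $X$, $\mu^\ast(X\cup Y)\le\mu^\ast(X)+\mu^\ast(Y)$ for all $X,Y$, and $\mu^\ast(k\cdot X+h)=\frac1k\mu^\ast(X)$ for all $X\subseteq\mathbb{H}$, $h,k\in\mathbb{N}^+$. *)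

(* Defs.v *)
From Stdlib Require Import ZArith Reals List.
Open Scope R_scope.

Inductive HKind : Type := HZ | HN | HNpos.

Definition inH (H : HKind) (z : Z) : Prop :=
  match H with
  | HZ => True
  | HN => (0 <= z)%Z
  | HNpos => (1 <= z)%Z
  end.

Definition subsetH (H : HKind) (X : Z -> Prop) : Prop := forall z, X z -> inH H z.

Definition set_union (X Y : Z -> Prop) : Z -> Prop := fun z => X z \/ Y z.

Definition affine_image (k h : Z) (X : Z -> Prop) : Z -> Prop :=
  fun z => exists x, X x /\ z = (k * x + h)%Z.

Definition upper_quasi_density (H : HKind) (mu : (Z -> Prop) -> R) : Prop :=
  mu (inH H) = 1 /\
  (forall X, subsetH H X -> mu X <= 1) /\
  (forall X Y, subsetH H X -> subsetH H Y -> mu (set_union X Y) <= mu X + mu Y) /\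
  (forall X (h k : Z), subsetH H X -> (1 <= h)%Z -> (1 <= k)%Z ->
      mu (affine_image k h X) = / IZR k * mu X).

Definition finite_set (X : Z -> Prop) : Prop := exists l : list Z, forall z, X z -> In z l.

Definition sym_diff (X Y : Z -> Prop) : Z -> Prop :=
  fun z => (X z /\ ~ Y z) \/ (Y z /\ ~ X z).

Definition union_APs (H : HKind) (ps : list (Z * Z)) : Z -> Prop :=
  fun z => exists p, In p ps /\ affine_image (fst p) (snd p) (inH H) z.

Definition almost_AP_union (H : HKind) (Y : Z -> Prop) : Prop :=
  exists ps : list (Z * Z),
    (forall p, In p ps -> (1 <= fst p)%Z /\ (0 <= snd p)%Z) /\
    finite_set (sym_diff Y (union_APs H ps)).

(* Main.v *)
Require Import Defs.
From Stdlib Require Import ZArith Reals List.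
From Stdlib Require Import Lia Lra Classical FunctionalExtensionality PropExtensionality.
Open Scope R_scope.

Lemma mu_ext (mu : (Z -> Prop) -> R) (A B : Z -> Prop) :
  (forall z, A z <-> B z) -> mu A = mu B.
Proof.
  intros E. f_equal. apply functional_extensionality; intro z.
  apply propositional_extensionality; auto.
Qed.

Definition sing (a : Z) : Z -> Prop := fun z => z = a.

Lemma mu_empty H mu : upper_quasi_density H mu -> mu (fun _ => False) = 0.
Proof.
  intros [m1 [m2 [m3 m4]]].
  assert (E := m4 (fun _ => False) 1%Z 2%Z ltac:(red; tauto) ltac:(lia) ltac:(lia)).
  rewrite (mu_ext mu (affine_image 2 1 (fun _ => False)) (fun _ => False)) in E.
  - lra.
  - intro z; unfold affine_image; split; [intros [x [[] _]] | tauto].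
Qed.

Lemma mu_nonneg H mu A : upper_quasi_density H mu -> subsetH H A -> 0 <= mu A.
Proof.
  intros [m1 [m2 [m3 m4]]] HA.
  assert (E := m3 A A HA HA).
  rewrite (mu_ext mu (set_union A A) A) in E by (unfold set_union; tauto). lra.
Qed.

Lemma aff_sing k h x z : affine_image k h (sing x) z <-> sing (k * x + h)%Z z.
Proof.
  unfold affine_image, sing; split.
  - intros [y [-> ->]]. reflexivity.
  - intros ->. exists x; auto.
Qed.

Lemma sing_sub H a : inH H a -> subsetH H (sing a).
Proof. intros Ha z Hz; unfold sing in Hz; subst; auto. Qed.

Lemma mu_sing0 H mu a : upper_quasi_density H mu -> inH H a -> mu (sing a) = 0.
Proof.
  intros Hq Ha. pose proof Hq as [m1 [m2 [m3 m4]]].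
  set (x0 := match H with HNpos => 1%Z | _ => 0%Z end).
  assert (Hx0 : inH H x0 /\ (0 <= x0)%Z) by (destruct H; simpl; lia).
  destruct Hx0 as [Hx0 Hx0'].
  assert (E1 := m4 (sing x0) 1%Z 2%Z (sing_sub H x0 Hx0) ltac:(lia) ltac:(lia)).
  rewrite (mu_ext mu _ _ (aff_sing 2 1 x0)) in E1.
  assert (E2 := m4 (sing x0) (x0+1)%Z 1%Z (sing_sub H x0 Hx0) ltac:(lia) ltac:(lia)).
  rewrite (mu_ext mu _ _ (aff_sing 1 (x0+1) x0)) in E2.
  replace (1 * x0 + (x0 + 1))%Z with (2 * x0 + 1)%Z in E2 by ring.
  rewrite Rinv_1 in E2.
  assert (Z0 : mu (sing x0) = 0) by lra.
  destruct (Z.lt_total a x0) as [Hlt | [Heq | Hgt]].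
  - assert (E3 := m4 (sing a) (x0 - a)%Z 1%Z (sing_sub H a Ha) ltac:(lia) ltac:(lia)).
    rewrite (mu_ext mu _ _ (aff_sing 1 (x0 - a) a)) in E3.
    replace (1 * a + (x0 - a))%Z with x0 in E3 by ring.
    rewrite Rinv_1 in E3. lra.
  - subst; auto.
  - assert (E3 := m4 (sing x0) (a - x0)%Z 1%Z (sing_sub H x0 Hx0) ltac:(lia) ltac:(lia)).
    rewrite (mu_ext mu _ _ (aff_sing 1 (a - x0) x0)) in E3.
    replace (1 * x0 + (a - x0))%Z with a in E3 by ring.
    rewrite Rinv_1 in E3. lra.
Qed.

Lemma mu_fin0 H mu : upper_quasi_density H mu -> forall l A,
  subsetH H A -> (forall z, A z -> In z l) -> mu A = 0.
Proof.
  intros Hq. pose proof Hq as [m1 [m2 [m3 m4]]].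
  induction l as [|a l IH]; intros A HA Hl.
  - rewrite (mu_ext mu A (fun _ => False)).
    + apply (mu_empty H mu Hq).
    + intro z; split; [intro Hz; exact (Hl z Hz) | tauto].
  - assert (S1 : subsetH H (fun z => A z /\ z = a)) by (intros z [Hz _]; auto).
    assert (S2 : subsetH H (fun z => A z /\ z <> a)) by (intros z [Hz _]; auto).
    assert (E := m3 _ _ S1 S2).
    rewrite (mu_ext mu (set_union _ _) A) in E.
    2:{ intro z; unfold set_union; split; [tauto|].
        intro Hz; destruct (Z.eq_dec z a); tauto. }
    assert (M1 : mu (fun z => A z /\ z = a) = 0).
    { destruct (classic (A a)) as [Ha | Ha].
      - rewrite (mu_ext mu _ (sing a)).
        + apply (mu_sing0 H mu a Hq (HA a Ha)).
        + intro z; unfold sing; split; [tauto | intros ->; auto].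
      - rewrite (mu_ext mu _ (fun _ => False)).
        + apply (mu_empty H mu Hq).
        + intro z; split; [intros [Hz ->]; auto | tauto]. }
    assert (M2 : mu (fun z => A z /\ z <> a) = 0).
    { apply IH; auto. intros z [Hz Hne]. destruct (Hl z Hz); [congruence | auto]. }
    pose proof (mu_nonneg H mu A Hq HA). lra.
Qed.

Definition bigU (js : list Z) (F : Z -> Z -> Prop) : Z -> Prop :=
  fun z => exists j, In j js /\ F j z.

Definition sumR (js : list Z) (g : Z -> R) : R :=
  fold_right (fun j acc => g j + acc) 0 js.

Lemma bigU_sub H js F : (forall j, In j js -> subsetH H (F j)) -> subsetH H (bigU js F).
Proof. intros HF z [j [Hj Hz]]. exact (HF j Hj z Hz). Qed.

Lemma mu_bigU H mu : upper_quasi_density H mu -> forall js F g,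
  (forall j, In j js -> subsetH H (F j)) ->
  (forall j, In j js -> mu (F j) <= g j) -> mu (bigU js F) <= sumR js g.
Proof.
  intros Hq. pose proof Hq as [m1 [m2 [m3 m4]]].
  induction js as [|a js IH]; intros F g HF Hg; simpl.
  - rewrite (mu_ext mu _ (fun _ => False)).
    + rewrite (mu_empty H mu Hq); lra.
    + intro z; split; [intros [j [[] _]] | tauto].
  - rewrite (mu_ext mu _ (set_union (F a) (bigU js F))).
    + assert (S2 : subsetH H (bigU js F)) by (apply bigU_sub; intros; apply HF; simpl; auto).
      assert (E := m3 _ _ (HF a (or_introl eq_refl)) S2).
      assert (E2 : mu (bigU js F) <= sumR js g) by (apply IH; intros; [apply HF|apply Hg]; simpl; auto).
      assert (E3 := Hg a (or_introl eq_refl)). lra.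
    + intro z; unfold bigU, set_union; simpl; split.
      * intros [j [[->|Hj] Hz]]; eauto.
      * intros [Hz | [j [Hj Hz]]]; eauto.
Qed.

Lemma sumR_add l f g : sumR l f + sumR l g = sumR l (fun j => f j + g j).
Proof. induction l; simpl; lra. Qed.

Lemma sumR_ext l f g : (forall j, f j = g j) -> sumR l f = sumR l g.
Proof. intros E; induction l; simpl; auto. rewrite E, IHl; auto. Qed.

Lemma sumR_const l c : sumR l (fun _ => c) = INR (length l) * c.
Proof. induction l; simpl length; [simpl; lra|]. rewrite S_INR. simpl. rewrite IHl. lra. Qed.

Lemma ap_char H q r M z : (1 <= q)%Z -> (0 <= r)%Z -> (q + r <= M)%Z ->
  (H = HZ \/ (M <= z)%Z) -> (affine_image q r (inH H) z <-> (q | z - r)%Z).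
Proof.
  intros Hq Hr HM Hb; split.
  - intros [x [_ ->]]. exists x; ring.
  - intros [c Hc]. exists c. split; [|lia].
    destruct H; simpl; auto; destruct Hb as [E|E]; try discriminate; nia.
Qed.

Definition prodq (ps : list (Z * Z)) : Z := fold_right (fun p acc => (fst p * acc)%Z) 1%Z ps.
Definition sumqr (ps : list (Z * Z)) : Z := fold_right (fun p acc => (fst p + snd p + acc)%Z) 0%Z ps.

Lemma prodq_props ps : (forall p, In p ps -> (1 <= fst p)%Z /\ (0 <= snd p)%Z) ->
  (1 <= prodq ps)%Z /\ (forall p, In p ps -> (fst p | prodq ps)%Z) /\
  (0 <= sumqr ps)%Z /\ (forall p, In p ps -> (fst p + snd p <= sumqr ps)%Z).
Proof.
  induction ps as [|a ps IH]; intros Hps; simpl.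
  - repeat split; try lia; intros p [].
  - destruct IH as [I1 [I2 [I3 I4]]]; [intros; apply Hps; simpl; auto|].
    destruct (Hps a (or_introl eq_refl)) as [A1 A2].
    repeat split; try nia.
    + intros p [->|Hp]; [exists (prodq ps); ring|].
      apply Z.divide_mul_r; auto.
    + intros p [->|Hp]; [lia|]. specialize (I4 p Hp). lia.
Qed.

Lemma finite_range M : finite_set (fun z => (0 <= z < M)%Z).
Proof.
  exists (map Z.of_nat (seq 0 (Z.to_nat M))). intros z Hz.
  apply in_map_iff. exists (Z.to_nat z). split; [apply Z2Nat.id; lia|].
  apply in_seq. lia.
Qed.

Theorem mainTheorem7 (H : HKind) (mu : (Z -> Prop) -> R) (X Y : Z -> Prop) :
  upper_quasi_density H mu ->
  (forall z, X z -> Y z) ->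
  subsetH H Y ->
  almost_AP_union H Y ->
  mu X <= mu Y.
Proof.
  intros Hq HXY HY [ps [Hps [l1 Hl1]]].
  pose proof Hq as [m1 [m2 [m3 m4]]].
  destruct (prodq_props ps Hps) as [Hk [Hdiv [HS0 HS]]].
  set (k := prodq ps) in *. set (S := sumqr ps) in *.
  set (M := (2 * k + S)%Z).
  set (b := fun j => existsb (fun p => Z.eqb ((j - snd p) mod fst p) 0) ps).
  assert (Hb : forall j, b j = true <-> exists p, In p ps /\ (fst p | j - snd p)%Z).
  { intro j. unfold b. rewrite existsb_exists. split.
    - intros [p [Hp E]]. exists p; split; auto. apply Z.eqb_eq in E.
      destruct (Hps p Hp). apply Z.mod_divide; auto; lia.
    - intros [p [Hp E]]. exists p; split; auto. apply Z.eqb_eq.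
      destruct (Hps p Hp). apply Z.mod_divide; auto; lia. }
  set (js := map Z.of_nat (seq 1 (Z.to_nat k))).
  assert (Hjs : forall j, In j js <-> (1 <= j <= k)%Z).
  { intro j; unfold js; rewrite in_map_iff; split.
    - intros [n [<- Hn]]. apply in_seq in Hn. lia.
    - intros Hj. exists (Z.to_nat j). split; [apply Z2Nat.id; lia|]. apply in_seq; lia. }
  assert (Hlen : length js = Z.to_nat k) by (unfold js; rewrite length_map, length_seq; auto).
  set (C := fun j => affine_image k j (inH H)).
  assert (HCsub : forall j, (1 <= j)%Z -> subsetH H (C j)).
  { intros j Hj z [x [Hx ->]]. destruct H; simpl in *; auto; nia. }
  set (V := bigU js (fun j z => b j = true /\ C j z)).
  set (Big := fun z => H = HZ \/ (M <= z)%Z).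
  assert (Hcov : forall z, Big z -> exists j, In j js /\ C j z /\ (k | z - j)%Z).
  { intros z Hz. exists ((z - 1) mod k + 1)%Z.
    pose proof (Z.mod_pos_bound (z - 1) k ltac:(lia)).
    assert (Hd : (k | z - ((z - 1) mod k + 1))%Z).
    { exists ((z - 1) / k)%Z. pose proof (Z.div_mod (z - 1) k ltac:(lia)). lia. }
    split; [apply Hjs; lia|]. split; auto.
    unfold C. apply (ap_char H k _ M); auto; try lia; unfold M; lia.
    }
  assert (HUV : forall z, Big z -> (union_APs H ps z <-> V z)).
  { intros z Hz; split.
    - intros [p [Hp Ha]]. destruct (Hps p Hp) as [P1 P2].
      apply (ap_char H _ _ M) in Ha; auto; [|specialize (HS p Hp); unfold M; lia].
      destruct (Hcov z Hz) as [j [Hj [HC Hkj]]].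
      exists j; split; auto; split; auto. apply Hb. exists p; split; auto.
      replace (j - snd p)%Z with ((z - snd p) - (z - j))%Z by ring.
      apply Z.divide_sub_r; auto. apply (Z.divide_trans _ k); auto.
    - intros [j [Hj [Hbj [x [Hx Hzx]]]]]. apply Hb in Hbj.
      destruct Hbj as [p [Hp Hdp]]. exists p; split; auto.
      destruct (Hps p Hp) as [P1 P2].
      apply (ap_char H _ _ M); auto; [specialize (HS p Hp); unfold M; lia|].
      replace (z - snd p)%Z with ((z - j) + (j - snd p))%Z by ring.
      apply Z.divide_add_r; auto. eapply Z.divide_trans; [apply Hdiv; auto|].
      exists x. lia. }
  assert (HNB : finite_set (fun z => inH H z /\ ~ Big z)).
  { destruct H.
    - exists nil. intros z [_ Hz]. exfalso; apply Hz; left; auto.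
    - destruct (finite_range M) as [l Hl]. exists l. intros z [Hz Hb']. apply Hl.
      simpl in Hz. unfold Big in Hb'. lia.
    - destruct (finite_range M) as [l Hl]. exists l. intros z [Hz Hb']. apply Hl.
      simpl in Hz. unfold Big in Hb'. lia. }
  assert (HVsub : subsetH H V).
  { intros z [j [Hj [_ HC]]]. apply Hjs in Hj. exact (HCsub j ltac:(lia) z HC). }
  assert (HYV : finite_set (sym_diff Y V)).
  { destruct HNB as [l2 Hl2]. exists (l1 ++ l2). intros z Hz. apply in_or_app.
    destruct (classic (Big z)) as [HB | HB].
    - left. apply Hl1. pose proof (HUV z HB). unfold sym_diff in *. tauto.
    - right. apply Hl2. split; auto. destruct Hz as [[Hz _]|[Hz _]]; auto. }
  assert (Hkpos : 0 < / IZR k) by (apply Rinv_0_lt_compat; apply IZR_lt; lia).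
  assert (Hup : mu X <= sumR js (fun j => if b j then / IZR k else 0)).
  { set (SX := fun j z => b j = true /\ X z /\ C j z).
    set (Rr := fun z => X z /\ ~ V z).
    rewrite (mu_ext mu X (set_union (bigU js SX) Rr)).
    2:{ intro z; unfold set_union, Rr; split.
        - intro Hz. destruct (classic (V z)) as [HV|HV]; [left|right; auto].
          destruct HV as [j [Hj [Hbj HC]]]. exists j; unfold SX; auto.
        - intros [[j [_ [_ [Hz _]]]] | [Hz _]]; auto. }
    assert (SS : forall j, In j js -> subsetH H (SX j)).
    { intros j _ z [_ [Hz _]]. apply HY, HXY; auto. }
    assert (SR : subsetH H Rr) by (intros z [Hz _]; apply HY, HXY; auto).
    assert (E := m3 _ _ (bigU_sub H js SX SS) SR).
    assert (ER : mu Rr = 0).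
    { destruct HYV as [l Hl]. apply (mu_fin0 H mu Hq l); auto.
      intros z [Hz HV]. apply Hl. left. split; auto. }
    assert (EB : mu (bigU js SX) <= sumR js (fun j => if b j then / IZR k else 0)).
    { apply (mu_bigU H mu Hq); auto. intros j Hj. apply Hjs in Hj.
      destruct (b j) eqn:Ebj.
      - set (X' := fun x => inH H x /\ X (k * x + j)%Z).
        rewrite (mu_ext mu _ (affine_image k j X')).
        + assert (SX' : subsetH H X') by (intros x [Hx _]; auto).
          rewrite (m4 X' j k SX' ltac:(lia) ltac:(lia)).
          pose proof (m2 X' SX').
          rewrite <- (Rmult_1_r (/ IZR k)) at 2.
          apply Rmult_le_compat_l; lra.
        + intro z; unfold SX, X', C, affine_image; rewrite Ebj; split.
          * intros [_ [Hz [x [Hx ->]]]]. exists x; auto.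
          * intros [x [[Hx Hz] ->]]. repeat split; auto. exists x; auto.
      - rewrite (mu_ext mu _ (fun _ => False)).
        + rewrite (mu_empty H mu Hq); lra.
        + intro z; unfold SX; rewrite Ebj; split; [intros [E' _]; discriminate | tauto]. }
    lra. }
  assert (Hlo : 1 <= mu Y + sumR js (fun j => if b j then 0 else / IZR k)).
  { set (T := fun j z => b j = false /\ C j z).
    set (F := fun z => inH H z /\ ~ Y z /\ ~ bigU js T z).
    assert (ST : forall j, In j js -> subsetH H (T j)).
    { intros j Hj z [_ HC]. apply Hjs in Hj. exact (HCsub j ltac:(lia) z HC). }
    assert (SF : subsetH H F) by (intros z [Hz _]; auto).
    rewrite <- m1.
    rewrite (mu_ext mu (inH H) (set_union Y (set_union (bigU js T) F))).
    2:{ intro z; unfold set_union, F; split.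
        - intro Hz. destruct (classic (Y z)); [left; auto|right].
          destruct (classic (bigU js T z)); [left; auto|right; auto].
        - intros [Hz | [Hz | [Hz _]]]; [exact (HY z Hz) | | exact Hz].
          exact (bigU_sub H js T ST z Hz). }
    assert (SU : subsetH H (set_union (bigU js T) F)).
    { intros z [Hz|Hz]; [exact (bigU_sub H js T ST z Hz) | exact (SF z Hz)]. }
    assert (E1 := m3 _ _ HY SU).
    assert (E2 := m3 _ _ (bigU_sub H js T ST) SF).
    assert (EF : mu F = 0).
    { destruct HYV as [l Hl]. destruct HNB as [l2 Hl2].
      apply (mu_fin0 H mu Hq (l ++ l2)); auto.
      intros z [Hz [HYz HT]]. apply in_or_app.
      destruct (classic (Big z)) as [HB|HB]; [left|right; apply Hl2; auto].
      apply Hl. right. split; auto.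
      destruct (Hcov z HB) as [j [Hj [HC _]]].
      destruct (b j) eqn:Ebj.
      - exists j; unfold V; auto.
      - exfalso. apply HT. exists j. split; auto. split; auto. }
    assert (EB : mu (bigU js T) <= sumR js (fun j => if b j then 0 else / IZR k)).
    { apply (mu_bigU H mu Hq); auto. intros j Hj. apply Hjs in Hj.
      destruct (b j) eqn:Ebj.
      - rewrite (mu_ext mu _ (fun _ => False)).
        + rewrite (mu_empty H mu Hq); lra.
        + intro z; unfold T; rewrite Ebj; split; [intros [E' _]; discriminate | tauto].
      - rewrite (mu_ext mu _ (C j)).
        + unfold C. rewrite (m4 (inH H) j k ltac:(intros z Hz; auto) ltac:(lia) ltac:(lia)).
          rewrite m1. lra.
        + intro z; unfold T; rewrite Ebj; tauto. }
    lra. }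
  assert (Hsum : sumR js (fun j => if b j then / IZR k else 0) +
                 sumR js (fun j => if b j then 0 else / IZR k) = 1).
  { rewrite sumR_add.
    rewrite (sumR_ext js _ (fun _ => / IZR k)) by (intro j; destruct (b j); lra).
    rewrite sumR_const, Hlen, INR_IZR_INZ, Z2Nat.id by lia.
    field. apply not_0_IZR; lia. }
  lra.
Qed.
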